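(* A responsive social choice function $f:\Theta\to Z$ satisfies strict event monotonicity if and only if it satisfies strict iterated-elimination monotonicity.
   Context: Setting: $\mathcal{I}$ is a finite set of agents with $|\mathcal{I}|\ge3$; $\Theta$ is a finite set of $n$ states; $Z$ is a countable set of pure outcomes; $Y=\Delta(Z)$ is the set of lotteries on $Z$, each $z\in Z$ identified with the degenerate lottery. Each agent $i$ has at each state $\theta$ a utility $u_i(\cdot,\theta):Z\to\mathbb{R}$, extended to $Y$ by expected utility $u_i(y,\theta)=\sum_z y_zu_i(z,\theta)$. An SCF is a map $f:\Theta\to Z$ (assumed throughout with $|f(\Theta)|\ge2$); it is responsive if it is injective. Active agents: $\mathcal{I}^{\theta}=\{i\in\mathcal{I}:\exists z\in Z,\ u_i(f(\theta),\theta)>u_i(z,\theta)\}$; for nonempty $E\subseteq\Theta$, $\mathcal{I}^E=\bigcap_{\theta\in E}\mathcal{I}^\theta$. Strict event monotonicity: for every $\theta'\in\Theta$ and nonempty $E\subseteq\Theta$, if for all $\theta\in E$, $y\in Y$, $i\in\mathcal{I}^E$ we have [$u_i(f(\theta),\theta)>u_i(y,\theta)\Rightarrow u_i(f(\theta),\theta')\ge u_i(y,\theta')$], then $f(E)=\{f(\theta')\}$. Strict iterated-elimination monotonicity: for every $\theta'\in\Theta$ there exists $(\theta^1,\dots,\theta^n)$ with $\{\theta^1,\dots,\theta^n\}=\Theta$ and $\theta^n=\theta'$ such that for every $k\in\{1,\dots,n-1\}$ there exist $y\in Y$ and $i\in\mathcal{I}^{\{\theta^k,\theta^{k+1},\dots,\theta^n\}}$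 with $u_i(f(\theta^k),\theta^k)>u_i(y,\theta^k)$ and $u_i(y,\theta')>u_i(f(\theta^k),\theta')$. *)

(* Defs.v *)
From HB Require Import structures.
From mathcomp Require Import all_boot all_order all_algebra.
From mathcomp Require Import reals.
Set Implicit Arguments. Unset Strict Implicit. Unset Printing Implicit Defensive.
Import Order.TTheory GRing.Theory Num.Theory.
Local Open Scope ring_scope.

Section Defs.
Variables (R : realType) (I Theta : finType) (Z : countType).

(* A (finitely supported) lottery on Z: a list of (outcome, probability)
   pairs with nonnegative weights summing to 1 (repetitions allowed). *)
Definition lottery := seq (Z * R).

Definition is_lottery (y : lottery) : Prop :=
  all (fun p => 0 <= p.2) y /\ \sum_(p <- y) p.2 = 1.

Definition dirac_lottery (z : Z) : lottery := [:: (z, 1)].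

Definition EU (v : Z -> R) (y : lottery) : R := \sum_(p <- y) p.2 * v p.1.

Variables (u : I -> Z -> Theta -> R) (f : Theta -> Z).

Definition active (theta : Theta) (i : I) : Prop :=
  exists z : Z, u i (f theta) theta > u i z theta.

Definition active_event (E : {set Theta}) (i : I) : Prop :=
  forall theta, theta \in E -> active theta i.

Definition strict_event_monotonicity : Prop :=
  forall (theta' : Theta) (E : {set Theta}),
    E != set0 ->
    (forall theta (y : lottery) i,
        theta \in E -> is_lottery y -> active_event E i ->
        u i (f theta) theta > EU (u i ^~ theta) y ->
        u i (f theta) theta' >= EU (u i ^~ theta') y) ->
    (forall theta, theta \in E -> f theta = f theta').

(* The sequence (theta^1,...,theta^n) is  rcons s theta'  (so theta^n = theta'),
   required to enumerate Theta without repetition; theta^k = nth theta' s (k-1)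
   and {theta^k,...,theta^n} = drop (k-1) (rcons s theta'). *)
Definition strict_iterated_elimination_monotonicity : Prop :=
  forall theta' : Theta,
    exists s : seq Theta,
      perm_eq (rcons s theta') (enum Theta) /\
      forall k : nat, (k < size s)%N ->
        let thk := nth theta' s k in
        exists (y : lottery) (i : I),
          [/\ is_lottery y,
              active_event [set x | x \in drop k (rcons s theta')] i,
              u i (f thk) thk > EU (u i ^~ thk) y &
              EU (u i ^~ theta') y > u i (f thk) theta'].

End Defs.

(* Main.v *)
Require Import Defs.
From HB Require Import structures.
From mathcomp Require Import all_boot all_order all_algebra.
From mathcomp Require Import reals.
From Stdlib Require Import Classical.
Import Order.TTheory GRing.Theory Num.Theory.
Local Open Scope ring_scope.

Lemma sem_build (R : realType) (I Theta : finType) (Z : countType)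
    (u : I -> Z -> Theta -> R) (f : Theta -> Z) :
  injective f -> strict_event_monotonicity u f ->
  forall theta' n (E : {set Theta}), theta' \in E -> (#|E| <= n)%N ->
  exists s : seq Theta,
    [/\ uniq (rcons s theta'), (forall x, (x \in rcons s theta') = (x \in E)) &
      forall k : nat, (k < size s)%N ->
        let thk := nth theta' s k in
        exists (y : lottery R Z) (i : I),
          [/\ is_lottery y,
              active_event u f [set x | x \in drop k (rcons s theta')] i,
              u i (f thk) thk > EU (u i ^~ thk) y &
              EU (u i ^~ theta') y > u i (f thk) theta']].
Proof.
move=> finj sem theta' n; elim: n => [|n IH] E HE Hc.
  by move: Hc; rewrite leqn0 => /eqP/cards0_eq Ee; rewrite Ee inE in HE.
have [Es|Ens] := eqVneq E [set theta'].
  exists [::]; split => //= x; by rewrite Es !inE.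
have Ene : E != set0 by apply/set0Pn; exists theta'.
have : ~ (forall theta (y : lottery R Z) i,
        theta \in E -> is_lottery y -> active_event u f E i ->
        u i (f theta) theta > EU (u i ^~ theta) y ->
        u i (f theta) theta' >= EU (u i ^~ theta') y).
  move=> H; have := sem theta' E Ene H => Hall.
  move/negP: Ens; apply; apply/eqP/setP => x; rewrite inE.
  apply/idP/eqP => [xE|->//]; exact: finj (Hall x xE).
move=> /not_all_ex_not [th /not_all_ex_not [y /not_all_ex_not [i H]]].
have [thE {}H] := imply_to_and _ _ H.
have [ly {}H] := imply_to_and _ _ H.
have [ai {}H] := imply_to_and _ _ H.
have [h1 h2] := imply_to_and _ _ H.
have {}h2 : EU (u i ^~ theta') y > u i (f th) theta' by rewrite ltNge; apply/negP.
have thne : th != theta'.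
  apply/eqP => eth; subst th.
  by have := lt_trans h1 h2; rewrite ltxx.
have HE' : theta' \in E :\ th by rewrite !inE eq_sym thne.
have Hc' : (#|E :\ th| <= n)%N.
  by move: Hc; rewrite (cardsD1 th E) thE add1n ltnS.
have [s' [us' ms' ws']] := IH _ HE' Hc'.
exists (th :: s'); split.
- rewrite ?rcons_cons /= /= us' andbT ms' !inE eqxx //.
- move=> x; rewrite ?rcons_cons /= inE ms' !inE.
  by case: eqVneq => [->|] //=; rewrite thE.
- case=> [|k] /=; last by move=> Hk; exact: ws'.
  move=> _; exists y, i; split => //.
  move=> x; rewrite inE ?rcons_cons inE ms' !inE => Hx; apply: ai.
  by move: Hx; case: eqVneq => [->|] //.
Qed.

Theorem proposition1 (R : realType) (I Theta : finType) (Z : countType)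
    (u : I -> Z -> Theta -> R) (f : Theta -> Z) :
  (2 < #|I|)%N ->
  (exists theta1 theta2 : Theta, f theta1 <> f theta2) ->
  injective f ->
  (strict_event_monotonicity u f <->
   strict_iterated_elimination_monotonicity u f).
Proof.
move=> _ _ finj; split.
  move=> sem theta'.
  have [s [us ms ws]] := @sem_build _ _ _ _ u f finj sem _ _ _ (in_setT theta') (leqnn _).
  exists s; split => //.
  apply: uniq_perm => //; first exact: enum_uniq.
  by move=> x; rewrite ms mem_enum !inE.
move=> siem theta' E Ene Hyp th0 th0E.
apply: NNPP => neq.
have [s [ps ws]] := siem theta'.
have th0s : th0 \in s.
  have : th0 \in rcons s theta' by rewrite (perm_mem ps) mem_enum.
  rewrite mem_rcons inE; case/orP => // /eqP e; by subst th0.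
have hs : has (mem E) s by apply/hasP; exists th0.
set k := find (mem E) s.
have kl : (k < size s)%N by rewrite -has_find.
have [y [i [ly ai h1 h2]]] := ws k kl.
have thkE : nth theta' s k \in E by have := nth_find theta' hs.
have ai' : active_event u f E i.
  move=> x xE; apply: ai; rewrite inE.
  have : x \in rcons s theta' by rewrite (perm_mem ps) mem_enum.
  rewrite -[X in is_true (_ \in X) -> _](cat_take_drop k (rcons s theta')) mem_cat => /orP [|//].
  rewrite -cats1 takel_cat ?(ltnW kl) // => /(nthP theta') [j jl ej].
  rewrite size_take kl in jl.
  move: xE; rewrite -ej nth_take // => xE.
  have := before_find theta' jl; rewrite /= => e; by move: xE; rewrite [X in is_true X -> _]e.
have := Hyp _ _ _ thkE ly ai' h1.
by rewrite leNgt h2.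
Qed.
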